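(* Fix $i\in\{1,\ldots,N\}$, a DFA mode $q$ and an atomic-proposition formula $\alpha^i$. Suppose $\hat{\mathbf{M}}^i\preceq^{\delta^i}_0\mathbf{M}^i$ with relation $\mathscr{R}^i$, interface $\mathcal U_i$ and lifted kernel $\mathbb{W}_{\mathbb{T}^i}$, and let $\pi^i_q:\hat{\mathbb{X}}_i\to\hat{\mathbb{U}}_i$ be given. Let $v^{(i)}(\cdot,\cdot,q):\hat{\mathbb{X}}_i\times\mathbb{X}_i\to[0,1]$ and $v^{(i)}(\cdot,q):\hat{\mathbb{X}}_i\to[0,1]$ satisfy $v^{(i)}(\hat x_i,x_i,q)\ge v^{(i)}(\hat x_i,q)$ for all $(\hat x_i,x_i)\in\mathscr{R}^i$. Then for all $(\hat x_i,x_i)\in\mathscr{R}^i$, $$\mathbf{T}^{\pi^i_q}_{\alpha^i}(v^{(i)})(\hat x_i,x_i,q)\;\ge\;\mathbf{T}^{\pi^i_q}_{\delta^i,\alpha^i}(v^{(i)})(\hat x_i,q).$$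
   Context: Agent $\mathbf{M}^i=(\mathbb{X}_i,\mathbb{U}_i,\mathbb{Y}_i,\mathbb{T}_i,x_{i,0},h_i)$ and its abstraction $\hat{\mathbf{M}}^i=(\hat{\mathbb{X}}_i,\hat{\mathbb{U}}_i,\hat{\mathbb{Y}}_i,\hat{\mathbb{T}}_i,\hat x_{i,0},\hat h_i)$ are general Markov decision processes: Polish state and input spaces, a metric output space, a stochastic kernel $\mathbb{T}(\cdot\mid x,u)$, an initial state and a measurable output map. $\hat{\mathbf{M}}^i\preceq^{\delta}_{\epsilon}\mathbf{M}^i$ means that there exist: - a measurable relation $\mathscr{R}^i\subset\hat{\mathbb{X}}_i\times\mathbb{X}_i$; - an interface $\mathcal U_i:\hat{\mathbb{U}}_i\times\hat{\mathbb{X}}_i\times\mathbb{X}_i\to\mathcal{P}(\mathbb{U}_i)$; - a kernel $\mathbb{W}_{\mathbb{T}^i}(\cdot\mid\hat u,\hat x,x)$ on $\hat{\mathbb{X}}_i\times\mathbb{X}_i$; such that: - $(\hat x_{i,0},x_{i,0})\in\mathscr{R}^i$; - $d_{\mathbb{Y}_i}(\hat h_i(\hat x),h_i(x))\le\epsilon$ on $\mathscr{R}^i$; - for every $\hat u$ and every $(\hat x,x)\in\mathscr{R}^i$, $\mathbb{W}_{\mathbb{T}^i}(\cdot\mid\hat u,\hat x,x)$ has first marginal $\hat{\mathbb{T}}_i(\cdot\mid\hat x,\hat u)$, has second marginal $\mathbb{T}_i(\cdot\mid x,\mathcal U_i(\hat u,\hat x,x))$, and satisfies $\mathbb{W}_{\mathbb{T}^i}(\mathscr{R}^i\mid\hat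 u,\hat x,x)\ge1-\delta$. $\alpha^i$ is a conjunction of (possibly negated) atomic propositions from $\mathrm{AP}_i$. With labelling map $L^i:\mathbb{Y}_i\to2^{\mathrm{AP}_i}$, the indicator $\mathcal L_{\alpha^i}(\hat x_i)$ equals $1$ if $L^i(\hat h_i(\hat x_i))\models\alpha^i$ and $0$ otherwise. Coupled operator: $$\mathbf{T}^{\pi^i_q}_{\alpha^i}(v^{(i)})(\hat x_i,x_i,q)=\int\mathcal L_{\alpha^i}(\hat x_i')\,v^{(i)}(\hat x_i',x_i',q)\,\mathbb{W}_{\mathbb{T}^i}\big(d\hat x_i'\times dx_i'\mid\pi^i_q(\hat x_i),\hat x_i,x_i\big).$$ Abstract operator: $$\mathbf{T}^{\pi^i_q}_{\alpha^i}(v^{(i)})(\hat x_i,q)=\mathbb{E}\big[\mathcal L_{\alpha^i}(\hat x_i')v^{(i)}(\hat x_i',q)\big],\qquad \hat x_i'\sim\hat{\mathbb{T}}_i(\cdot\mid\hat x_i,\pi^i_q(\hat x_i)).$$ Robust operator: $$\mathbf{T}^{\pi^i_q}_{\delta^i,\alpha^i}(v^{(i)})(\hat x_i,q)=\mathbf L\big(\mathbf{T}^{\pi^i_q}_{\alpha^i}(v^{(i)})(\hat x_i,q)-\delta^i\big),$$ where $\mathbf L(a)=\min\{1,\max\{0,a\}\}$ is truncation to $[0,1]$. *)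

(* Defs.v *)
From HB Require Import structures.
From mathcomp Require Import all_boot all_order all_algebra.
From mathcomp Require Import all_classical all_reals all_analysis.
From Stdlib Require List.
Set Implicit Arguments. Unset Strict Implicit. Unset Printing Implicit Defensive.
Import Order.TTheory GRing.Theory Num.Theory.
Local Open Scope classical_set_scope.
Local Open Scope ring_scope.

Definition is_metric (R : realType) (Y : Type) (dY : Y -> Y -> R) : Prop :=
  [/\ forall a b, 0 <= dY a b,
      forall a b, dY a b = 0 <-> a = b,
      forall a b, dY a b = dY b a &
      forall a b c, dY a c <= dY a b + dY b c].

(* a conjunction of (possibly negated) atomic propositions: list of literals
   (p, true) = p, (p, false) = ~ p *)
Definition conj_formula (AP : Type) := seq (AP * bool).

Definition sat_conj (AP : Type) (l : set AP) (alpha : conj_formula AP) : Prop :=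
  forall lit, List.In lit alpha -> (l lit.1 <-> lit.2 = true).

Definition Lind (R : realType) (Xh Y AP : Type) (hh : Xh -> Y) (L : Y -> set AP)
  (alpha : conj_formula AP) (xh : Xh) : R :=
  if `[< sat_conj (L (hh xh)) alpha >] then 1 else 0.

Definition trunc01 (R : realType) (a : R) : R := Num.min 1 (Num.max 0 a).

Definition sim_rel (R : realType)
  {dX dU dXh dUh dY : measure_display}
  {X : measurableType dX} {U : measurableType dU}
  {Xh : measurableType dXh} {Uh : measurableType dUh} {Y : measurableType dY}
  (dist : Y -> Y -> R)
  (T : R.-pker (X * U)%type ~> X) (x0 : X) (h : X -> Y)
  (Th : R.-pker (Xh * Uh)%type ~> Xh) (xh0 : Xh) (hh : Xh -> Y)
  (eps delta : R)
  (Rel : set (Xh * X)) (Uif : Uh -> Xh -> X -> probability U R)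
  (W : Uh -> Xh -> X -> probability (Xh * X)%type R) : Prop :=
  [/\ measurable Rel,
      Rel (xh0, x0),
      (forall xh x, Rel (xh, x) -> dist (hh xh) (h x) <= eps) &
      (forall uh xh x, Rel (xh, x) ->
         [/\ (forall A, measurable A -> W uh xh x (A `*` setT) = Th (xh, uh) A),
             (forall B, measurable B ->
                W uh xh x (setT `*` B) = (\int[Uif uh xh x]_u T (x, u) B)%E) &
             (W uh xh x Rel >= (1 - delta)%:E)%E])].

Definition Tcoupled (R : realType)
  {dX dXh : measure_display} {X : measurableType dX} {Xh : measurableType dXh}
  {Uh Y AP Q : Type} (hh : Xh -> Y) (L : Y -> set AP) (alpha : conj_formula AP)
  (W : Uh -> Xh -> X -> probability (Xh * X)%type R) (pi : Xh -> Uh)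
  (v : Xh -> X -> Q -> R) (xh : Xh) (x : X) (q : Q) : R :=
  Rintegral (W (pi xh) xh x) setT
    (fun z : Xh * X => Lind R hh L alpha z.1 * v z.1 z.2 q).

Definition Tabs (R : realType)
  {dXh dUh : measure_display} {Xh : measurableType dXh} {Uh : measurableType dUh}
  {Y AP Q : Type} (hh : Xh -> Y) (L : Y -> set AP) (alpha : conj_formula AP)
  (Th : R.-pker (Xh * Uh)%type ~> Xh) (pi : Xh -> Uh)
  (v : Xh -> Q -> R) (xh : Xh) (q : Q) : R :=
  Rintegral (Th (xh, pi xh)) setT (fun y => Lind R hh L alpha y * v y q).

Definition Trobust (R : realType)
  {dXh dUh : measure_display} {Xh : measurableType dXh} {Uh : measurableType dUh}
  {Y AP Q : Type} (hh : Xh -> Y) (L : Y -> set AP) (alpha : conj_formula AP)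
  (Th : R.-pker (Xh * Uh)%type ~> Xh) (pi : Xh -> Uh) (delta : R)
  (v : Xh -> Q -> R) (xh : Xh) (q : Q) : R :=
  trunc01 (Tabs hh L alpha Th pi v xh q - delta).

(* Main.v *)
Require Import Defs.
From HB Require Import structures.
From mathcomp Require Import all_boot all_order all_algebra.
From mathcomp Require Import all_classical all_reals all_analysis.
From mathcomp Require Import measurable_realfun.
From mathcomp Require Import lra.
Import Order.TTheory GRing.Theory Num.Theory.
Local Open Scope classical_set_scope.
Local Open Scope ring_scope.

Lemma sat_conj_meas (R : realType) (dY : measure_display) (Y : measurableType dY)
  (AP : Type) (L : Y -> set AP) (L_meas : forall p : AP, measurable [set y | L y p])
  (alpha : conj_formula AP) : measurable [set y | sat_conj (L y) alpha].
Proof.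
elim: alpha => [|[p b] al IH].
  rewrite (_ : [set y | _] = setT); first exact: measurableT.
  by apply/seteqP; split => y //= _ lit [].
rewrite (_ : [set y | _] = (if b then [set y | L y p] else ~` [set y | L y p])
   `&` [set y | sat_conj (L y) al]).
  apply: measurableI => //; case: b => //; exact: measurableC.
apply/seteqP; split => y /=.
  move=> H; split; last by move=> lit Hl; apply: H; right.
  move: (H (p, b) (or_introl erefl)) => /=; clear H.
  by case: b => /= -[H1 H2]; [exact: H2 | move/H1].
move=> [Hb H] lit [<-|Hl]; last exact: H.
by case: b Hb => /= Hb; split => //.
Qed.

Lemma Lind_meas (R : realType) (dXh dY : measure_display) (Xh : measurableType dXh)
  (Y : measurableType dY) (hh : Xh -> Y) (hh_meas : measurable_fun setT hh)
  (AP : Type) (L : Y -> set AP) (L_meas : forall p : AP, measurable [set y | L y p])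
  (alpha : conj_formula AP) :
  measurable_fun setT (Lind R hh L alpha).
Proof.
set S := hh @^-1` [set y | sat_conj (L y) alpha].
have mS : measurable S.
  rewrite -(setTI S); apply: hh_meas => //; exact: sat_conj_meas.
rewrite (_ : Lind R hh L alpha = \1_S); first exact: measurable_realfun.measurable_indic.
apply/funext => z; rewrite indicE /Lind.
case: asboolP => H.
  by rewrite mem_set.
by rewrite memNset.
Qed.

Lemma Lind01 (R : realType) (Xh Y AP : Type) (hh : Xh -> Y) (L : Y -> set AP)
  (alpha : conj_formula AP) z : 0 <= Lind R hh L alpha z <= 1.
Proof. by rewrite /Lind; case: asboolP => _; rewrite ?lexx ?ler01. Qed.

Lemma int01 (R : realType) (d : measure_display) (T : measurableType d)
  (mu : {measure set T -> \bar R}) (mu1 : mu setT = 1%E) (f : T -> R)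
  (mf : measurable_fun setT f) (f01 : forall x, 0 <= f x <= 1) :
  (\int[mu]_(x in setT) (f x)%:E)%E = (Rintegral mu setT f)%:E /\
  0 <= Rintegral mu setT f <= 1.
Proof.
have h0 : (0 <= \int[mu]_(x in setT) (f x)%:E)%E.
  by apply: integral_ge0 => x _; rewrite lee_fin; case/andP: (f01 x).
have h1 : (\int[mu]_(x in setT) (f x)%:E <= 1)%E.
  apply: (@le_trans _ _ (\int[mu]_(x in setT) (cst 1%E) x)%E).
    apply: ge0_le_integral => //.
    - by move=> x _; rewrite lee_fin; case/andP: (f01 x).
    - exact/measurable_realfun.measurable_EFinP.
    - by move=> x _; rewrite lee_fin; case/andP: (f01 x).
  by rewrite integral_cst // mu1 mule1.
have fin : (\int[mu]_(x in setT) (f x)%:E)%E \is a fin_num.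
  by rewrite ge0_fin_numE // (le_lt_trans h1) // ltey.
rewrite /Rintegral fineK //; split => //.
by rewrite -!lee_fin fineK // h0 h1.
Qed.

Theorem lemma1 (R : realType)
  (dX dU dXh dUh dY : measure_display)
  (X : measurableType dX) (U : measurableType dU)
  (Xh : measurableType dXh) (Uh : measurableType dUh) (Y : measurableType dY)
  (dist : Y -> Y -> R) (dist_metric : is_metric dist)
  (T : R.-pker (X * U)%type ~> X) (x0 : X) (h : X -> Y) (h_meas : measurable_fun setT h)
  (Th : R.-pker (Xh * Uh)%type ~> Xh) (xh0 : Xh) (hh : Xh -> Y)
  (hh_meas : measurable_fun setT hh)
  (AP : Type) (L : Y -> set AP) (L_meas : forall p : AP, measurable [set y | L y p])
  (alpha : conj_formula AP)
  (delta : R)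
  (Rel : set (Xh * X)) (Uif : Uh -> Xh -> X -> probability U R)
  (W : Uh -> Xh -> X -> probability (Xh * X)%type R)
  (Hsim : sim_rel dist T x0 h Th xh0 hh 0 delta Rel Uif W)
  (Q : Type) (q : Q) (pi : Xh -> Uh)
  (vc : Xh -> X -> Q -> R) (va : Xh -> Q -> R)
  (vc_meas : measurable_fun setT (fun z : Xh * X => vc z.1 z.2 q))
  (va_meas : measurable_fun setT (fun y : Xh => va y q))
  (vc01 : forall xh x, 0 <= vc xh x q <= 1)
  (va01 : forall xh, 0 <= va xh q <= 1)
  (Hv : forall xh x, Rel (xh, x) -> vc xh x q >= va xh q) :
  forall xh x, Rel (xh, x) ->
    Tcoupled hh L alpha W pi vc xh x q >= Trobust hh L alpha Th pi delta va xh q.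
Proof.
move=> xh x Rx.
case: Hsim => mRel _ _ HW.
case: (HW (pi xh) xh x Rx) => Hm1 _ HRel.
set P := W (pi xh) xh x.
set Pa := Th (xh, pi xh).
set li := Lind R hh L alpha.
have mli : measurable_fun setT li by exact: Lind_meas.
have mli1 : measurable_fun setT (fun z : Xh * X => li z.1).
  exact: measurableT_comp mli measurable_fst.
have mG : measurable_fun setT (fun z : Xh * X => li z.1 * vc z.1 z.2 q).
  exact: measurable_realfun.measurable_funM.
have mF : measurable_fun setT (fun z : Xh * X => li z.1 * va z.1 q).
  apply: measurable_realfun.measurable_funM => //.
  exact: measurableT_comp va_meas measurable_fst.
have mf : measurable_fun setT (fun y => li y * va y q) by exact: measurable_realfun.measurable_funM.
have l01 : forall y, 0 <= li y <= 1 := fun y => @Lind01 R _ _ _ hh L alpha y.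
have G01 : forall z : Xh * X, 0 <= li z.1 * vc z.1 z.2 q <= 1.
  move=> z; case/andP: (l01 z.1) => a b; case/andP: (vc01 z.1 z.2) => c d.
  by rewrite mulr_ge0 //= mulr_ile1.
have F01 : forall y, 0 <= li y * va y q <= 1.
  move=> y; case/andP: (l01 y) => a b; case/andP: (va01 y) => c d.
  by rewrite mulr_ge0 //= mulr_ile1.
have P1 : P setT = 1%E by rewrite probability_setT.
have Pa1 : Pa setT = 1%E by rewrite /Pa prob_kernel.
have [IG G01'] := @int01 _ _ _ P P1 _ mG G01.
have [IF _] := @int01 _ _ _ P P1 _ mF (fun z => F01 z.1).
have [If _] := @int01 _ _ _ Pa Pa1 _ mf F01.
rewrite /Trobust /Tabs /Tcoupled -/P -/Pa -/li.
set g := Rintegral P _ _ in IG G01' *.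
set a := Rintegral Pa _ _ in If *.
set b := Rintegral P _ _ in IF.
have ab : b = a.
  apply/EFin_inj; rewrite -IF -If.
  have -> : (\int[P]_(z in setT) (li z.1 * va z.1 q)%:E)%E =
            (\int[P]_(z in fst @^-1` setT) ((fun y => (li y * va y q)%:E) \o fst) z)%E.
    by rewrite preimage_setT.
  have mfE : measurable_fun setT (EFin \o (fun y => li y * va y q)).
    exact/measurable_realfun.measurable_EFinP.
  have f0 : {in setT, forall y, (0 <= (li y * va y q)%:E)%E}.
    by move=> y _; rewrite lee_fin; case/andP: (F01 y).
  rewrite -(ge0_integral_pushforward measurable_fst P measurableT mfE f0).
  apply: eq_measure_integral => A mA _.
  rewrite /pushforward /Pa -Hm1 //; congr (P _).
  by apply/seteqP; split => -[u v] /=; [move=> Au; split | case].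
have mC : measurable (~` Rel) by exact: measurableC.
have PC : (P (~` Rel) <= delta%:E)%E.
  rewrite probability_setC //.
  have : (P Rel <= 1)%E by exact: probability_le1.
  move: HRel; case: (P Rel) => [r| |] //=; rewrite ?lee_fin => h1 h2.
    by lra.
have fw : P (~` Rel) \is a fin_num.
  by rewrite ge0_fin_numE // (le_lt_trans (probability_le1 _ mC)) // ltey.
set w := fine (P (~` Rel)).
have Pw : P (~` Rel) = w%:E by rewrite fineK.
have wd : w <= delta by rewrite -lee_fin -Pw.
have bgw : b <= g + w.
  rewrite -lee_fin -IF EFinD -IG -Pw -(setIT (~` Rel)) -integral_indic //.
  rewrite -ge0_integralD //; [|
    by move=> z _; rewrite lee_fin; case/andP: (G01 z) |
    exact/measurable_realfun.measurable_EFinP |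
    exact/measurable_realfun.measurable_EFinP/measurable_realfun.measurable_indic].
  apply: ge0_le_integral => //.
  - by move=> z _; rewrite lee_fin; case/andP: (F01 z.1).
  - exact/measurable_realfun.measurable_EFinP.
  - apply: emeasurable_funD; apply/measurable_realfun.measurable_EFinP => //; exact: measurable_realfun.measurable_indic.
  move=> [u v] _; rewrite lee_fin indicE /=.
  case: (boolP ((u, v) \in ~` Rel)) => H /=.
    case/andP: (F01 u) => _ hF; case/andP: (G01 (u, v)) => hG _ /=.
    by move: hG => /= hG; lra.
  rewrite addr0; have Ruv : Rel (u, v).
    by apply: contrapT => nR; move/negP: H; apply; exact: mem_set.
  apply: ler_wpM2l; first by case/andP: (l01 u).
  exact: Hv.
rewrite /trunc01 ge_min; apply/orP; right; rewrite ge_max; apply/andP; split.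
  by case/andP: G01'.
by case/andP: G01' => g0 _; lra.

Qed.
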